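(* Let $H_n$ be the pyrene system with $n$ pyrene fragments, and let $F(H_0,x)=1$. Then $F(H_1,x)=4x^2+2x$ and for all $n\ge 2$, $$F(H_n,x)=(4x^2+2x)F(H_{n-1},x)-x^2F(H_{n-2},x).$$
   Context: Pyrene system: draw the hexagonal lattice so that every hexagon has two vertical sides; horizontally adjacent hexagons then share a vertical edge. For $n\ge1$, $H_n$ is the hexagonal system (the plane graph formed by the vertices and edges of the following $4n$ hexagons) consisting of a horizontal linear row of $2n$ hexagons $h_{1,1},h_{1,2},\dots,h_{n,1},h_{n,2}$, consecutive ones sharing a vertical edge, together with, for each $i$, a hexagon $s_{i,1}$ directly above and a hexagon $s_{i,2}$ directly below the common edge of $h_{i,1}$ and $h_{i,2}$ (each sharing an edge with both $h_{i,1}$ and $h_{i,2}$). $H_0$ is the null graph. For a perfect matching $M$ of $G$, a forcing set is a subset $S\subseteq M$ contained in no other perfect matching of $G$, and the forcing number $f(G,M)$ is the minimum size of a forcing set. The forcing polynomial is $F(G,x)=\sum_{M\in\mathcal{M}(G)}x^{f(G,M)}$, where $\mathcal{M}(G)$ is the set of perfect matchings of $G$. *)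

(* Defs.v *)
From mathcomp Require Import all_boot all_order all_algebra.
Set Implicit Arguments. Unset Strict Implicit. Unset Printing Implicit Defensive.
Import GRing.Theory.

(** * Generic graph notions.
    A (finite simple) graph is given by a vertex set [V : {set T}] and an edge
    set [E : {set {set T}}] whose elements are 2-element subsets of [V]. *)
Section Matchings.
Variable T : finType.

Definition is_perfect_matching (V : {set T}) (E : {set {set T}})
    (M : {set {set T}}) : bool :=
  (M \subset E) && [forall v in V, #|[set e in M | v \in e]| == 1%N].

Definition perfect_matchings (V : {set T}) (E : {set {set T}}) :
    {set {set {set T}}} := [set M | is_perfect_matching V E M].

Definition forcing_set (V : {set T}) (E : {set {set T}})
    (M S : {set {set T}}) : bool :=
  (S \subset M) &&
  [forall M' in perfect_matchings V E, (S \subset M') ==> (M' == M)].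

(** f(G,M): minimum size of a forcing set of M (M itself is always a forcing
    set, so #|M| is a valid starting value of the minimum). *)
Definition forcing_number (V : {set T}) (E : {set {set T}})
    (M : {set {set T}}) : nat :=
  \big[minn/#|M|]_(S : {set {set T}} | forcing_set V E M S) #|S|.

Definition forcing_poly (V : {set T}) (E : {set {set T}}) : {poly int} :=
  (\sum_(M in perfect_matchings V E) 'X^(forcing_number V E M))%R.

End Matchings.

(** * The pyrene system H_n, embedded in the "brick wall" model of the
    hexagonal lattice.  Lattice points are (x,y) in N^2; horizontal lattice
    edges join (x,y)-(x+1,y); vertical lattice edges join (x,y)-(x,y+1) when
    x+y is even.  A hexagon (with two vertical sides) is the "brick" with
    lower-left corner (a,b), a+b even: vertices (a..a+2) x (b..b+1),
    vertical sides at x=a and x=a+2.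

    For H_n (n >= 1):
    - the row hexagons h_{1,1},h_{1,2},...,h_{n,1},h_{n,2} are the bricks
      (2k, 2), k < 2n (consecutive ones share a vertical edge);
    - s_{i,1} (above the common edge of h_{i,1},h_{i,2}) is the brick
      (4i-3, 3) and s_{i,2} (below it) is the brick (4i-3, 1), i = 1..n. *)

Definition pyr_vertex (n : nat) : finType := ('I_(4 * n + 1) * 'I_5)%type.

Definition pyr_brick (n a b : nat) : bool :=
  ((b == 2%N) && ~~ odd a && (a < 4 * n)%N)
  || (((b == 1%N) || (b == 3%N)) && (a %% 4 == 1%N) && (a < 4 * n)%N).

Definition hex_vertex (a b x y : nat) : bool :=
  (a <= x <= a + 2)%N && (b <= y <= b + 1)%N.

Definition hex_edge (a b x1 y1 x2 y2 : nat) : bool :=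
  ((y1 == y2) && ((y1 == b) || (y1 == b + 1)%N) &&
     (((x2 == x1 + 1)%N && (a <= x1 < a + 2)%N) ||
      ((x1 == x2 + 1)%N && (a <= x2 < a + 2)%N)))
  || ((x1 == x2) && ((x1 == a) || (x1 == a + 2)%N) &&
     (((y2 == y1 + 1)%N && (y1 == b)) || ((y1 == y2 + 1)%N && (y2 == b)))).

Definition pyr_V (n : nat) : {set pyr_vertex n} :=
  [set v : pyr_vertex n | [exists a : 'I_(4 * n + 1), exists b : 'I_5,
      pyr_brick n a b && hex_vertex a b v.1 v.2]].

Definition pyr_E (n : nat) : {set {set pyr_vertex n}} :=
  [set e : {set pyr_vertex n} | [exists u : pyr_vertex n, exists w : pyr_vertex n,
      (e == [set u; w]) &&
      [exists a : 'I_(4 * n + 1), exists b : 'I_5,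
         pyr_brick n a b && hex_edge a b u.1 u.2 w.1 w.2]]].

Definition F_pyrene (n : nat) : {poly int} :=
  if n is 0 then 1%R else forcing_poly (pyr_V n) (pyr_E n).

(* Main.v *)
Require Import Defs.
From mathcomp Require Import all_boot all_order all_algebra.
Import GRing.Theory.
Set Warnings "-notation-overridden,-ambiguous-paths".
From mathcomp Require Import zify ring.
Set Implicit Arguments. Unset Strict Implicit. Unset Printing Implicit Defensive.

Ltac bd := repeat match goal with
 | H : is_true (_ || _) |- _ => case/orP: H => H
 | H : is_true (_ && _) |- _ => let H1 := fresh H in case/andP: H => H H1
 | H : is_true (_ == _) |- _ => move/eqP: H => H
 | H : is_true true |- _ => clear H
 | H : is_true false |- _ => discriminate H
 end.

Section Pyr.
Variable n : nat.

Definition hrow (x y : nat) : bool :=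
  ((y == 2) || (y == 3)) && (x < 4*n)
  || ((y == 1) || (y == 4)) && ((x %% 4 == 1) || (x %% 4 == 2)) && (x < 4*n).
Definition vcol (x y : nat) : bool :=
  (y == 2) && ~~ odd x && (x <= 4*n) && (0 < n)
  || ((y == 1) || (y == 3)) && ((x %% 4 == 1) || (x %% 4 == 3)) && (x < 4*n).
Definition edge1 (p q : nat * nat) : bool :=
  (q.2 == p.2) && (q.1 == p.1 + 1) && hrow p.1 p.2
  || (q.1 == p.1) && (q.2 == p.2 + 1) && vcol p.1 p.2.
Definition edgeC (p q : nat * nat) : bool := edge1 p q || edge1 q p.
Definition Vc (p : nat * nat) : bool :=
  (0 < n) && (((p.2 == 2) || (p.2 == 3)) && (p.1 <= 4*n)
  || ((p.2 == 1) || (p.2 == 4)) && (p.1 %% 4 != 0) && (p.1 < 4*n)).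

Definition coords (u : pyr_vertex n) : nat * nat := (nat_of_ord u.1, nat_of_ord u.2).
Lemma lt0_4n1 : 0 < 4 * n + 1. Proof. by rewrite addn1. Qed.
Definition ox : 'I_(4*n+1) := Ordinal lt0_4n1.
Definition mk (p : nat * nat) : pyr_vertex n :=
  (insubd ox p.1, insubd (ord0 : 'I_5) p.2).

Lemma mkK u : mk (coords u) = u.
Proof. by case: u => a b; rewrite /mk /coords /= !valKd. Qed.

Lemma coordsK p : p.1 <= 4 * n -> p.2 <= 4 -> coords (mk p) = p.
Proof.
case: p => a b /= Ha Hb; rewrite /coords /mk /= !val_insubd.
have -> : a < 4 * n + 1 by lia.
by have -> : b < 5 by lia.
Qed.

Lemma coords_inj : injective coords.
Proof. by move=> u v H; rewrite -(mkK u) -(mkK v) H. Qed.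

Lemma edgeC_sym p q : edgeC p q = edgeC q p.
Proof. by rewrite /edgeC orbC. Qed.

Lemma edgeC_Vc p q : edgeC p q -> Vc p && Vc q.
Proof. case: p q => [a b] [c d]; rewrite /edgeC /edge1 /hrow /vcol /Vc /= => H; bd; subst; lia. Qed.
Lemma edgeC_range p q : edgeC p q -> [/\ p.1 <= 4*n, p.2 <= 4, q.1 <= 4*n & q.2 <= 4].
Proof. case: p q => [a b] [c d]; rewrite /edgeC /edge1 /hrow /vcol /= => H; bd; subst; split; lia. Qed.
Lemma Vc_range p : Vc p -> p.1 <= 4*n /\ p.2 <= 4.
Proof. case: p => [a b]; rewrite /Vc /= => H; bd; subst; split; lia. Qed.
Lemma brick_edge a b x1 y1 x2 y2 :
  pyr_brick n a b -> hex_edge a b x1 y1 x2 y2 -> edgeC (x1, y1) (x2, y2).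
Proof. rewrite /pyr_brick /hex_edge /edgeC /edge1 /hrow /vcol /= => H1 H2; bd; subst; lia. Qed.
Lemma brick_vertex a b x y :
  pyr_brick n a b -> hex_vertex a b x y -> Vc (x, y).
Proof. rewrite /pyr_brick /hex_vertex /Vc /= => H1 H2; bd; subst; lia. Qed.

Lemma V_Vc u : u \in pyr_V n -> Vc (coords u).
Proof.
rewrite inE => /existsP [a /existsP [b /andP [Hb Hv]]].
exact: brick_vertex Hb Hv.
Qed.

Lemma V_wit (u : pyr_vertex n) a b : a < 4 * n + 1 -> b < 5 -> pyr_brick n a b ->
  hex_vertex a b (coords u).1 (coords u).2 -> u \in pyr_V n.
Proof.
move=> Ha Hb H1 H2; rewrite inE; apply/existsP; exists (Ordinal Ha).
by apply/existsP; exists (Ordinal Hb); rewrite /= H1.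
Qed.

Lemma Vc_V u : Vc (coords u) -> u \in pyr_V n.
Proof.
have := ltn_ord u.2.
case: u => [x y]; rewrite /coords /= => Hy H.
move: H; rewrite /Vc /= => H; bd; case: (ltnP x (4*n)) => ?;
first [ apply: (@V_wit _ (x - x %% 2) 2); rewrite /pyr_brick /hex_vertex /coords /=; lia
      | apply: (@V_wit _ (4 * n - 2) 2); rewrite /pyr_brick /hex_vertex /coords /=; lia
      | apply: (@V_wit _ (4 * (x %/ 4) + 1) 1); rewrite /pyr_brick /hex_vertex /coords /=; lia
      | apply: (@V_wit _ (4 * (x %/ 4) + 1) 3); rewrite /pyr_brick /hex_vertex /coords /=; lia ].
Qed.

Lemma E_wit (u w : pyr_vertex n) a b : a < 4 * n + 1 -> b < 5 -> pyr_brick n a b ->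
  hex_edge a b (coords u).1 (coords u).2 (coords w).1 (coords w).2 -> [set u; w] \in pyr_E n.
Proof.
move=> Ha Hb H1 H2; rewrite inE; apply/existsP; exists u; apply/existsP; exists w.
rewrite eqxx /=; apply/existsP; exists (Ordinal Ha).
by apply/existsP; exists (Ordinal Hb); rewrite /= H1.
Qed.

Lemma edge1_E u w : edge1 (coords u) (coords w) -> [set u; w] \in pyr_E n.
Proof.
case: u w => [x1 y1] [x2 y2]; rewrite /coords /edge1 /hrow /vcol /= => H; bd;
first [ apply: (@E_wit _ _ (x1 - x1 %% 2) 2); rewrite /pyr_brick /hex_edge /coords /=; lia
      | apply: (@E_wit _ _ (4 * (x1 %/ 4) + 1) 1); rewrite /pyr_brick /hex_edge /coords /=; lia
      | apply: (@E_wit _ _ (4 * (x1 %/ 4) + 1) 3); rewrite /pyr_brick /hex_edge /coords /=; lia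
      | apply: (@E_wit _ _ x1 2); rewrite /pyr_brick /hex_edge /coords /=; lia
      | apply: (@E_wit _ _ (x1 - 2) 2); rewrite /pyr_brick /hex_edge /coords /=; lia ].
Qed.

Lemma edgeC_E u w : edgeC (coords u) (coords w) -> [set u; w] \in pyr_E n.
Proof.
case/orP => H; first exact: edge1_E.
by rewrite setUC; apply: edge1_E.
Qed.

Lemma E_edgeC u w : [set u; w] \in pyr_E n -> edgeC (coords u) (coords w).
Proof.
rewrite inE => /existsP [u' /existsP [w' /andP [/eqP He /existsP [a /existsP [b /andP [Hb Hh]]]]]].
have H : edgeC (coords u') (coords w') by exact: brick_edge Hb Hh.
have Hnd : u' != w'.
  apply/eqP => E; move: H; rewrite E /edgeC /edge1; case: (coords w') => ? ? /=; lia.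
have Hu : u \in [set u'; w'] by rewrite -He set21.
have Hw : w \in [set u'; w'] by rewrite -He set22.
have Hw' : w' \in [set u; w] by rewrite He set22.
have Hu' : u' \in [set u; w] by rewrite He set21.
case/set2P: Hu => Eu; case/set2P: Hw => Ew; subst.
- by move: Hw'; case/set2P => E; rewrite E eqxx in Hnd.
- exact: H.
- by rewrite edgeC_sym.
- by move: Hu'; case/set2P => E; rewrite E eqxx in Hnd.
Qed.

Lemma E_V u w : [set u; w] \in pyr_E n -> u \in pyr_V n.
Proof. by move/E_edgeC/edgeC_Vc/andP => [H _]; apply: Vc_V. Qed.

End Pyr.

Section Mof.
Variable n : nat.
Definition Mof (f : pyr_vertex n -> pyr_vertex n) : {set {set pyr_vertex n}} :=
  [set e | [exists u in pyr_V n, e == [set u; f u]]].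

Lemma E_form e : e \in pyr_E n -> exists u w, e = [set u; w].
Proof.
by rewrite inE => /existsP [u /existsP [w /andP [/eqP He _]]]; exists u, w.
Qed.

Lemma Mof_ext f g : {in pyr_V n, f =1 g} -> Mof f = Mof g.
Proof.
move=> H; apply/setP => e; rewrite !inE.
apply/existsP/existsP => [] [u /andP [Hu He]]; exists u; by rewrite Hu /= ?H // -?H.
Qed.
End Mof.

Section Partner.
Variable n : nat.
Variable M : {set {set pyr_vertex n}}.
Hypothesis HM : is_perfect_matching (pyr_V n) (pyr_E n) M.

Lemma HM_sub : M \subset pyr_E n.
Proof. by case/andP: HM. Qed.
Lemma HM_deg v : v \in pyr_V n -> #|[set e in M | v \in e]| == 1.
Proof. by case/andP: HM => _ /forallP H Hv; move: (H v); rewrite Hv. Qed.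

Definition partner (v : pyr_vertex n) := odflt v [pick w | [set v; w] \in M].

Lemma partner_in v : v \in pyr_V n -> [set v; partner v] \in M.
Proof.
move=> Hv; have /cards1P [e0 He0] := HM_deg Hv.
have : e0 \in [set e in M | v \in e] by rewrite He0 set11.
rewrite inE => /andP [He0M Hve0].
have [u [w Ee]] := E_form (subsetP HM_sub _ He0M).
rewrite /partner; case: pickP => [w' //|Hn].
exfalso; subst e0; case/set2P: Hve0 => Ev; subst.
- by move: (Hn w); rewrite He0M.
- by move: (Hn u); rewrite setUC He0M.
Qed.

Lemma partner_uniq v w : v \in pyr_V n -> [set v; w] \in M -> w = partner v.
Proof.
move=> Hv Hw; have /cards1P [e0 He0] := HM_deg Hv.
have H1 : [set v; w] \in [set e in M | v \in e] by rewrite inE Hw set21.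
have H2 : [set v; partner v] \in [set e in M | v \in e] by rewrite inE partner_in // set21.
rewrite He0 in H1 H2; move/set1P: H1 => H1; move/set1P: H2 => H2.
have E : [set v; w] = [set v; partner v] by rewrite H1 H2.
have : w \in [set v; partner v] by rewrite -E set22.
case/set2P => // Ew; subst w.
have : partner v \in [set v; v] by rewrite E set22.
by case/set2P.
Qed.

Lemma partner_V v : v \in pyr_V n -> partner v \in pyr_V n.
Proof.
move=> Hv; have := subsetP HM_sub _ (partner_in Hv).
by rewrite setUC => /E_V.
Qed.

Lemma partner_invol v : v \in pyr_V n -> partner (partner v) = v.
Proof.
move=> Hv; symmetry; apply: partner_uniq; first exact: partner_V.
by rewrite setUC partner_in.
Qed.

Lemma partner_edge v : v \in pyr_V n -> edgeC n (coords v) (coords (partner v)).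
Proof. by move=> Hv; apply: E_edgeC; apply: (subsetP HM_sub); apply: partner_in. Qed.

Lemma M_Mof : M = Mof partner.
Proof.
apply/setP => e; rewrite inE; apply/idP/existsP.
- move=> He; have [u [w Ee]] := E_form (subsetP HM_sub _ He).
  have Hu : u \in pyr_V n by apply: (@E_V _ u w); rewrite -Ee (subsetP HM_sub).
  exists u; rewrite Hu /= Ee; apply/eqP; congr [set _; _].
  by apply: partner_uniq => //; rewrite -Ee.
- by case=> u /andP [Hu /eqP ->]; apply: partner_in.
Qed.

Definition Q (p : nat * nat) : nat * nat := coords (partner (mk n p)).

Lemma Vc_mkV p : Vc n p -> mk n p \in pyr_V n.
Proof.
move=> Hp; apply: Vc_V; have [H1 H2] := Vc_range Hp.
by rewrite coordsK.
Qed.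

Lemma Q_edge p : Vc n p -> edgeC n p (Q p).
Proof.
move=> Hp; have [H1 H2] := Vc_range Hp.
by have := partner_edge (Vc_mkV Hp); rewrite coordsK.
Qed.

Lemma Q_Vc p : Vc n p -> Vc n (Q p).
Proof. by move=> Hp; have /andP [] := edgeC_Vc (Q_edge Hp). Qed.

Lemma Q_invol p : Vc n p -> Q (Q p) = p.
Proof.
move=> Hp; have [H1 H2] := Vc_range Hp.
by rewrite /Q mkK partner_invol ?Vc_mkV // coordsK.
Qed.

Lemma M_eq_Mof (f : nat * nat -> nat * nat) :
  (forall p, Vc n p -> Q p = f p) -> M = Mof (fun u => mk n (f (coords u))).
Proof.
move=> H; rewrite M_Mof; apply: Mof_ext => u Hu.
by rewrite -H ?V_Vc // /Q mkK mkK.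
Qed.

End Partner.

Definition mirror (p : nat * nat) : nat * nat := (4 - p.1, p.2).
Definition mir (f : nat * nat -> nat * nat) p := mirror (f (mirror p)).
Definition locLo (p : nat * nat) : nat * nat :=
  match p with
  | (1, 2) => (0, 2) | (1, 3) => (0, 3) | (2, 2) => (2, 3) | (2, 3) => (2, 2)
  | (1, 1) => (2, 1) | (2, 1) => (1, 1) | (3, 1) => (3, 2) | (3, 2) => (3, 1)
  | (1, 4) => (2, 4) | (2, 4) => (1, 4) | (3, 4) => (3, 3) | (3, 3) => (3, 4)
  | _ => p end.
Definition botA (p : nat * nat) : nat * nat :=
  match p with
  | (1, 1) => (2, 1) | (2, 1) => (1, 1) | (3, 1) => (3, 2) | (3, 2) => (3, 1)
  | (1, 2) => (2, 2) | (2, 2) => (1, 2) | _ => p end.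
Definition topA (p : nat * nat) : nat * nat :=
  match p with
  | (1, 4) => (2, 4) | (2, 4) => (1, 4) | (3, 4) => (3, 3) | (3, 3) => (3, 4)
  | (1, 3) => (2, 3) | (2, 3) => (1, 3) | _ => p end.
Definition locC (b1 b2 : bool) (p : nat * nat) : nat * nat :=
  if p.2 <= 2 then (if b1 then mir botA p else botA p)
  else (if b2 then mir topA p else topA p).
Definition loc (c : nat) (p : nat * nat) : nat * nat :=
  if c == 4 then locLo p else if c == 5 then mir locLo p else locC (2 <= c) (odd c) p.

Definition pts : seq (nat * nat) :=
  [:: (1,1); (1,2); (1,3); (1,4); (2,1); (2,2); (2,3); (2,4); (3,1); (3,2); (3,3); (3,4)].

Definition hrowR (r y : nat) : bool :=
  ((y == 2) || (y == 3)) && (r < 4) || ((y == 1) || (y == 4)) && ((r == 1) || (r == 2)).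
Definition vcolR (r y : nat) : bool :=
  (y == 2) && ~~ odd r && (r <= 4) || ((y == 1) || (y == 3)) && ((r == 1) || (r == 3)).
Definition edge1R (p q : nat * nat) : bool :=
  (q.2 == p.2) && (q.1 == p.1 + 1) && hrowR p.1 p.2
  || (q.1 == p.1) && (q.2 == p.2 + 1) && vcolR p.1 p.2.
Definition relE p q := edge1R p q || edge1R q p.
Definition grid4 (p : nat * nat) := [:: (p.1 + 1, p.2); (p.1 - 1, p.2); (p.1, p.2 + 1); (p.1, p.2 - 1)].
Definition nbrs p := [seq q <- grid4 p | relE p q].

Definition decn (g : nat * nat -> nat * nat) : nat :=
  if g (1,2) == (0,2) then 4 else if g (3,2) == (4,2) then 5
  else 2 * (g (2,1) == (3,1)) + (g (2,4) == (3,4)).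

Definition look (c : seq (nat * nat)) v := nth v c (index v pts).
Definition cands_of (ps : seq (nat * nat)) :=
  foldr (fun v acc => [seq w :: c | w <- nbrs v, c <- acc]) [:: [::]] ps.
Definition pre (c : seq (nat * nat)) :=
  all (fun v => (look c v \in pts) ==> (look c (look c v) == v)) pts
  && ((look c (1,2) == (0,2)) == (look c (1,3) == (0,3))).
Definition post (c : seq (nat * nat)) :=
  all (fun v => look c v == loc (decn (look c)) v) pts.

Lemma chk1 : all (fun c => pre c ==> post c) (cands_of pts).
Proof. vm_compute. reflexivity. Qed.

Definition wt (c : nat) : nat := if c < 4 then 2 else 1.
Definition S0loc (c : nat) : seq ((nat * nat) * (nat * nat)) :=
  if c == 4 then [:: ((1,2),(0,2))] else if c == 5 then [:: ((3,2),(4,2))]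
  else [:: (if 2 <= c then ((3,2),(2,2)) else ((1,2),(2,2)));
           (if odd c then ((3,3),(2,3)) else ((1,3),(2,3)))].
Definition newc (c : nat) (s : bool) : nat :=
  if c == 4 then 0 else if c == 5 then 3
  else if s then (if odd c then c - 1 else c + 1) else (if 2 <= c then c - 2 else c + 2).
Definition Zrel (c : nat) (s : bool) (p : nat * nat) : bool :=
  if c == 4 then (p.1 <= 2) && ((p.2 == 2) || (p.2 == 3))
  else if c == 5 then (2 <= p.1 <= 4) && ((p.2 == 2) || (p.2 == 3))
  else (1 <= p.1 <= 3) && (if s then 3 <= p.2 <= 4 else 1 <= p.2 <= 2).

Definition chk2b (c : nat) (v : nat * nat) : bool :=
  [&& relE v (loc c v),
      (loc c v \in pts) ==> (loc c (loc c v) == v),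
      (loc c v \notin pts) ==>
        ((c == 4) && (v.1 == 1) && (loc c v == (0, v.2)) && ((v.2 == 2) || (v.2 == 3))
         || (c == 5) && (v.1 == 3) && (loc c v == (4, v.2)) && ((v.2 == 2) || (v.2 == 3))),
      (newc c false != c) && (newc c false < 4),
      (newc c true != c) && (newc c true < 4),
      (loc c v != loc (newc c false) v) ==> Zrel c false v &
      (loc c v != loc (newc c true) v) ==> Zrel c true v].

Definition chk2c (c : nat) : bool :=
  [&& (loc c (1,2) == (0,2)) == (c == 4), (loc c (1,3) == (0,3)) == (c == 4),
      (loc c (3,2) == (4,2)) == (c == 5), (loc c (3,3) == (4,3)) == (c == 5),
      size (S0loc c) == wt c,
      all (fun e => (e.1 \in pts) && (loc c e.1 == e.2)) (S0loc c) &
      all (fun c' => all (fun e => loc c' e.1 == e.2) (S0loc c) ==> (c' == c)) (iota 0 6)].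

Lemma chk2 : all (fun c => all (chk2b c) pts && chk2c c) (iota 0 6).
Proof. vm_compute. reflexivity. Qed.

Lemma chk2bP c v : c < 6 -> v \in pts -> chk2b c v.
Proof.
move=> Hc Hv; have /allP /(_ c) := chk2; rewrite mem_iota add0n Hc => /(_ isT).
by case/andP => /allP /(_ v Hv).
Qed.
Lemma chk2cP c : c < 6 -> chk2c c.
Proof.
move=> Hc; have /allP /(_ c) := chk2; rewrite mem_iota add0n Hc => /(_ isT).
by case/andP.
Qed.

Lemma chk2bE c v : c < 6 -> v \in pts ->
  [/\ relE v (loc c v), (loc c v \in pts) ==> (loc c (loc c v) == v),
      (loc c v \notin pts) ==>
        ((c == 4) && (v.1 == 1) && (loc c v == (0, v.2)) && ((v.2 == 2) || (v.2 == 3))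
         || (c == 5) && (v.1 == 3) && (loc c v == (4, v.2)) && ((v.2 == 2) || (v.2 == 3))),
      (newc c false != c) && (newc c false < 4) /\ (newc c true != c) && (newc c true < 4) &
      ((loc c v != loc (newc c false) v) ==> Zrel c false v) /\
      ((loc c v != loc (newc c true) v) ==> Zrel c true v)].
Proof.
move=> Hc Hv; move: (chk2bP Hc Hv); rewrite /chk2b.
by move=> /andP [a /andP [b /andP [c' /andP [d /andP [e /andP [f g]]]]]].
Qed.

Lemma loc_rel c v : c < 6 -> v \in pts -> relE v (loc c v).
Proof. by move=> Hc Hv; case: (chk2bE Hc Hv). Qed.
Lemma loc_invol c v : c < 6 -> v \in pts -> loc c v \in pts -> loc c (loc c v) = v.
Proof. by move=> Hc Hv Hl; case: (chk2bE Hc Hv) => _ /implyP /(_ Hl) /eqP. Qed.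
Lemma loc_out c v : c < 6 -> v \in pts -> loc c v \notin pts ->
  (c = 4 /\ v.1 = 1 /\ loc c v = (0, v.2) \/ c = 5 /\ v.1 = 3 /\ loc c v = (4, v.2))
  /\ (v.2 = 2 \/ v.2 = 3).
Proof.
move=> Hc Hv Hl; case: (chk2bE Hc Hv) => _ _ /implyP /(_ Hl) H _ _.
bd; split; try (by left; auto); by right; auto.
Qed.
Lemma newc_prop c s : c < 6 -> newc c s != c /\ newc c s < 4.
Proof.
move=> Hc; case: (chk2bE (v := (1,1)) Hc isT) => _ _ _ [/andP [H1 H2] /andP [H3 H4]] _.
by case: s.
Qed.
Lemma newc_Z c s v : c < 6 -> v \in pts -> loc c v != loc (newc c s) v -> Zrel c s v.
Proof.
move=> Hc Hv; case: (chk2bE Hc Hv) => _ _ _ _ [/implyP H1 /implyP H2].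
by case: s.
Qed.

Lemma chk2cE c : c < 6 ->
  [/\ (loc c (1,2) == (0,2)) = (c == 4), (loc c (1,3) == (0,3)) = (c == 4),
      (loc c (3,2) == (4,2)) = (c == 5), (loc c (3,3) == (4,3)) = (c == 5) &
      [/\ size (S0loc c) = wt c,
      all (fun e => (e.1 \in pts) && (loc c e.1 == e.2)) (S0loc c) &
      forall c', c' < 6 -> all (fun e => loc c' e.1 == e.2) (S0loc c) -> c' = c]].
Proof.
move=> Hc; move: (chk2cP Hc); rewrite /chk2c.
move=> /andP [/eqP a /andP [/eqP b /andP [/eqP c' /andP [/eqP d /andP [/eqP e /andP [f /allP g]]]]]].
split => //; split => // c'' Hc'' H.
by have := g c''; rewrite mem_iota add0n Hc'' H => /(_ isT) /eqP.
Qed.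

Section Rel.
Variable n : nat.

Lemma edgeC_rel j p w : j < n -> p \in pts ->
  edgeC n (4 * j + p.1, p.2) w = (4 * j <= w.1) && relE p (w.1 - 4 * j, w.2).
Proof.
move=> Hj; rewrite /pts !inE => Hp; case: w => a b.
rewrite /edgeC /edge1 /hrow /vcol /relE /edge1R /hrowR /vcolR /=.
bd; subst => /=; apply/idP/idP => H; bd; subst; lia.
Qed.

Lemma cut_nbr k y w : k <= n -> (y = 2 \/ y = 3) -> edgeC n (4 * k, y) w ->
  (k < n /\ w = (4 * k + 1, y)) \/ (0 < k /\ w = (4 * k - 1, y)) \/ w = (4 * k, 5 - y).
Proof.
move=> Hk Hy; case: w => a b; rewrite /edgeC /edge1 /hrow /vcol /= => H.
case: Hy => ?; subst; bd; subst;
first [ left; split; [lia | congr pair; lia]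
      | right; left; split; [lia | congr pair; lia]
      | right; right; congr pair; lia
      | exfalso; lia ].
Qed.
End Rel.

Definition pt (s : seq nat) (p : nat * nat) : nat * nat :=
  let j := p.1 %/ 4 in let r := p.1 %% 4 in
  if r == 0 then
    (if nth 0 s j == 4 then (p.1 + 1, p.2)
     else if (0 < j) && (nth 0 s j.-1 == 5) then (p.1 - 1, p.2) else (p.1, 5 - p.2))
  else (4 * j + (loc (nth 0 s j) (r, p.2)).1, (loc (nth 0 s j) (r, p.2)).2).

Fixpoint noRL (s : seq nat) : bool :=
  match s with x :: ((y :: _) as s') => ~~ ((x == 5) && (y == 4)) && noRL s' | _ => true end.
Definition valid n s := (size s == n) && all (fun c => c < 6) s && noRL s.

Lemma noRL_nth s j : noRL s -> nth 0 s j = 5 -> nth 0 s j.+1 != 4.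
Proof.
elim: s j => [|x [|y s] IH] [|j] //=.
- by case/andP => H _ Hx; move: H; rewrite Hx.
- by case/andP => _ H; apply: IH.
Qed.

Lemma in_pts r y : ((r, y) \in pts) = (1 <= r <= 3) && (1 <= y <= 4).
Proof. rewrite /pts !inE !xpair_eqE; apply/idP/idP => H; bd; lia. Qed.

Lemma pt_int s j p : p \in pts ->
  pt s (4 * j + p.1, p.2) = (4 * j + (loc (nth 0 s j) p).1, (loc (nth 0 s j) p).2).
Proof.
case: p => r y; rewrite in_pts /= => H; rewrite /pt /=.
have -> : (4 * j + r) %/ 4 = j by lia.
have -> : (4 * j + r) %% 4 = r by lia.
by have -> : (r == 0) = false by lia.
Qed.

Lemma pt_cut s k y : pt s (4 * k, y) =
  if nth 0 s k == 4 then (4 * k + 1, y)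
  else if (0 < k) && (nth 0 s k.-1 == 5) then (4 * k - 1, y) else (4 * k, 5 - y).
Proof.
rewrite /pt /=.
have -> : (4 * k) %/ 4 = k by lia.
by have -> : (4 * k) %% 4 = 0 by lia.
Qed.

Section PtProps.
Variable n : nat.
Variable s : seq nat.
Hypothesis Hs : valid n s.

Lemma Hsize : size s = n. Proof. by case/andP: Hs => /andP [/eqP] . Qed.
Lemma nth_lt6 j : nth 0 s j < 6.
Proof.
case/andP: Hs => /andP [_ /all_nthP H] _.
case: (ltnP j (size s)) => Hj; first exact: H.
by rewrite nth_default.
Qed.
Lemma nth4_lt j : nth 0 s j = 4 -> j < n.
Proof. rewrite -Hsize => H; case: (ltnP j (size s)) => // Hj; by rewrite nth_default in H. Qed.
Lemma nth5_lt j : nth 0 s j = 5 -> j < n.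
Proof. rewrite -Hsize => H; case: (ltnP j (size s)) => // Hj; by rewrite nth_default in H. Qed.
Lemma nth_noRL j : nth 0 s j = 5 -> nth 0 s j.+1 != 4.
Proof. by case/andP: Hs => _; apply: noRL_nth. Qed.

Lemma Vc_dec p : Vc n p ->
  exists j r, p = (4 * j + r, p.2) /\
   ((r = 0 /\ j <= n /\ (p.2 = 2 \/ p.2 = 3)) \/ (j < n /\ (r, p.2) \in pts)).
Proof.
case: p => x y; rewrite /Vc /= => H.
exists (x %/ 4), (x %% 4); split; first by congr pair; lia.
case: (boolP (x %% 4 == 0)) => Hr.
- by left; bd; lia.
- by right; rewrite in_pts; bd; lia.
Qed.

Lemma loc12 c : c < 6 -> (loc c (1,2) == (0,2)) = (c == 4).
Proof. by case/chk2cE. Qed.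
Lemma loc13 c : c < 6 -> (loc c (1,3) == (0,3)) = (c == 4).
Proof. by case/chk2cE. Qed.
Lemma loc32 c : c < 6 -> (loc c (3,2) == (4,2)) = (c == 5).
Proof. by case/chk2cE. Qed.
Lemma loc33 c : c < 6 -> (loc c (3,3) == (4,3)) = (c == 5).
Proof. by case/chk2cE. Qed.

Lemma loc1y c y : c < 6 -> (y = 2 \/ y = 3) -> (loc c (1, y) == (0, y)) = (c == 4).
Proof. by move=> Hc [] ->; [apply: loc12 | apply: loc13]. Qed.
Lemma loc3y c y : c < 6 -> (y = 2 \/ y = 3) -> (loc c (3, y) == (4, y)) = (c == 5).
Proof. by move=> Hc [] ->; [apply: loc32 | apply: loc33]. Qed.

Lemma pt_edge p : Vc n p -> edgeC n p (pt s p).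
Proof.
move=> Hp; have Hn : 0 < n by case/andP: Hp.
have [j [r [Ep [[Hr [Hj Hy]] | [Hj Hin]]]]] := Vc_dec Hp; rewrite Ep.
- rewrite Hr addn0 pt_cut.
  case: ifP => [/eqP /nth4_lt H4 | _].
    rewrite /edgeC /edge1 /hrow /=; case: Hy => ->; lia.
  case: ifP => [/andP [H0 _] | _].
    rewrite /edgeC /edge1 /hrow /=; case: Hy => ->; lia.
  rewrite /edgeC /edge1 /vcol /=; case: Hy => ->; lia.
- have := pt_int s j Hin; rewrite /= => ->.
  rewrite (@edgeC_rel n j (r, p.2) _ Hj Hin) /=.
  have -> : 4 * j + (loc (nth 0 s j) (r, p.2)).1 - 4 * j = (loc (nth 0 s j) (r, p.2)).1 by lia.
  rewrite leq_addr /=.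
  by case: (loc _ _) (loc_rel (nth_lt6 j) Hin) => a b.
Qed.

Lemma pt_invol p : Vc n p -> pt s (pt s p) = p.
Proof.
move=> Hp; have [j [r [Ep [[Hr [Hj Hy]] | [Hj Hin]]]]] := Vc_dec Hp; rewrite Ep.
- rewrite Hr addn0 pt_cut.
  case: ifP => [/eqP H4 | H4].
    have Hin : (1, p.2) \in pts by rewrite in_pts; case: Hy => ->.
    have := pt_int s j Hin; rewrite /= => ->.
    have := loc1y (nth_lt6 j) Hy; rewrite H4 eqxx => /eqP ->.
    by rewrite addn0.
  case: ifP => [/andP [H0 /eqP H5] | H5].
    have Hin : (3, p.2) \in pts by rewrite in_pts; case: Hy => ->.
    have -> : 4 * j - 1 = 4 * j.-1 + 3 by lia.
    have := pt_int s j.-1 Hin; rewrite /= => ->.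
    have := loc3y (nth_lt6 j.-1) Hy; rewrite H5 eqxx => /eqP ->.
    by congr pair; rewrite /=; lia.
  rewrite pt_cut H4 H5; congr pair; case: Hy => ->; lia.
- have := pt_int s j Hin; rewrite /= => ->.
  set d := loc _ _.
  case: (boolP (d \in pts)) => Hd.
    have := pt_int s j Hd => ->.
    by rewrite /d loc_invol ?nth_lt6.
  have [[[H4 [H1 Hd']] | [H5 [H3 Hd']]] Hy] := loc_out (nth_lt6 j) Hin Hd;
    rewrite /d Hd' /=.
  + rewrite addn0 pt_cut H4 eqxx; congr pair; simpl in H1; lia.
  + have -> : 4 * j + 4 = 4 * j.+1 by lia.
    rewrite pt_cut.
    have /negbTE -> := nth_noRL H5.
    rewrite /= H5 eqxx; congr pair; simpl in H3; lia.
Qed.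

End PtProps.

Lemma set2_eq (T : finType) (x y z w : T) : [set x; y] = [set z; w] ->
  (x = z /\ y = w) \/ (x = w /\ y = z).
Proof.
move=> E.
have Hx : x \in [set z; w] by rewrite -E set21.
have Hy : y \in [set z; w] by rewrite -E set22.
have Hz : z \in [set x; y] by rewrite E set21.
have Hw : w \in [set x; y] by rewrite E set22.
case/set2P: Hx => Ex; subst x.
- case/set2P: Hw => Ew; subst w; first by case/set2P: Hy => ->; left.
  by left.
- case/set2P: Hz => Ez; subst z; last by right.
  by case/set2P: Hy => ->; right.
Qed.

Section Build.
Variable n : nat.
Definition build (s : seq nat) := Mof (fun u : pyr_vertex n => mk n (pt s (coords u))).

Lemma Mof_PM (f : nat * nat -> nat * nat) :
  (forall p, Vc n p -> edgeC n p (f p)) -> (forall p, Vc n p -> f (f p) = p) ->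
  is_perfect_matching (pyr_V n) (pyr_E n) (Mof (fun u => mk n (f (coords u)))).
Proof.
move=> He Hi; apply/andP; split.
- apply/subsetP => e; rewrite inE => /existsP [u /andP [Hu /eqP ->]].
  apply: edgeC_E; have Hv := V_Vc Hu.
  by have [_ _ H1 H2] := edgeC_range (He _ Hv); rewrite (coordsK H1 H2); apply: He.
- apply/forallP => v; apply/implyP => Hv.
  apply/cards1P; exists [set v; mk n (f (coords v))].
  apply/setP => e; rewrite !inE; apply/idP/idP.
  + case/andP => /existsP [u /andP [Hu /eqP Ee]] Hve.
    rewrite Ee in Hve *; case/set2P: Hve => Ev; first by rewrite Ev.
    have Hcu := V_Vc Hu; have [_ _ H1 H2] := edgeC_range (He _ Hcu).
    have Ecv : coords v = f (coords u) by rewrite Ev coordsK.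
    have Eu : u = mk n (f (coords v)) by rewrite Ecv Hi // mkK.
    by rewrite setUC -Ev -Eu.
  + move/eqP => ->; rewrite set21 andbT; apply/existsP; exists v; by rewrite Hv eqxx.
Qed.

Lemma build_PM s : valid n s -> is_perfect_matching (pyr_V n) (pyr_E n) (build s).
Proof. move=> Hs; apply: Mof_PM; [exact: pt_edge | exact: pt_invol]. Qed.

Lemma Mof_mem (f : nat * nat -> nat * nat) a b :
  (forall p, Vc n p -> edgeC n p (f p)) -> (forall p, Vc n p -> f (f p) = p) ->
  Vc n a -> Vc n b -> [set mk n a; mk n b] \in Mof (fun u => mk n (f (coords u))) -> f a = b.
Proof.
move=> He Hi Ha Hb; rewrite inE => /existsP [u /andP [Hu /eqP E]].
have [Ha1 Ha2] := Vc_range Ha; have [Hb1 Hb2] := Vc_range Hb.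
have Hcu := V_Vc Hu; have [_ _ H1 H2] := edgeC_range (He _ Hcu).
case: (set2_eq E) => [[E1 E2] | [E1 E2]].
- have Ea : a = coords u by rewrite -E1 coordsK.
  by rewrite Ea -[b](coordsK Hb1 Hb2) E2 coordsK.
- have Ea : a = f (coords u) by rewrite -(coordsK Ha1 Ha2) E1 coordsK.
  by rewrite Ea -E2 coordsK // Hi.
Qed.

Lemma build_mem s a b : valid n s -> Vc n a -> Vc n b ->
  [set mk n a; mk n b] \in build s -> pt s a = b.
Proof. move=> Hs; apply: Mof_mem; [exact: pt_edge | exact: pt_invol]. Qed.

Lemma build_in s a : valid n s -> Vc n a -> [set mk n a; mk n (pt s a)] \in build s.
Proof.
move=> Hs Ha; have [H1 H2] := Vc_range Ha.
rewrite inE; apply/existsP; exists (mk n a); rewrite (coordsK H1 H2) eqxx andbT; by apply: Vc_V; rewrite (coordsK H1 H2).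
Qed.
End Build.

Lemma relE_grid v w : relE v w -> w \in grid4 v.
Proof.
case: v w => [a b] [c d]; rewrite /relE /edge1R /hrowR /vcolR /grid4 !inE !xpair_eqE /= => H.
bd; subst; lia.
Qed.

Lemma nbrs_mem v w : relE v w -> w \in nbrs v.
Proof. by move=> H; rewrite mem_filter H relE_grid. Qed.

Lemma cands_mem (g : nat * nat -> nat * nat) ps :
  (forall v, v \in ps -> g v \in nbrs v) -> map g ps \in cands_of ps.
Proof.
elim: ps => [|v ps IH] H /=; first by rewrite inE.
apply: (allpairs_f (fun w c => w :: c)); first by apply: H; rewrite inE eqxx.
by apply: IH => u Hu; apply: H; rewrite inE Hu orbT.
Qed.

Lemma look_map g v : v \in pts -> look (map g pts) v = g v.
Proof. by move=> Hv; rewrite /look (nth_map v) ?index_mem // nth_index. Qed.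

Section Local.
Variable n : nat.
Variable M : {set {set pyr_vertex n}}.
Hypothesis HM : is_perfect_matching (pyr_V n) (pyr_E n) M.
Local Notation q := (Q M).

Definition gj j (v : nat * nat) : nat * nat :=
  let w := q (4 * j + v.1, v.2) in (w.1 - 4 * j, w.2).
Definition Hleft j := (q (4*j+1, 2) == (4*j, 2)) == (q (4*j+1, 3) == (4*j, 3)).

Lemma pts_Vc j v : j < n -> v \in pts -> Vc n (4 * j + v.1, v.2).
Proof. by case: v => r y; rewrite in_pts /Vc /= => Hj H; lia. Qed.

Lemma q_int j v : j < n -> v \in pts ->
  q (4 * j + v.1, v.2) = (4 * j + (gj j v).1, (gj j v).2) /\ relE v (gj j v).
Proof.
move=> Hj Hv; have := Q_edge HM (pts_Vc Hj Hv).
rewrite (@edgeC_rel n j v _ Hj Hv) => /andP [H1 H2]; split => //.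
by rewrite /gj; move: H1; case: (q (4 * j + v.1, v.2)) => a b /= H1; congr pair; lia.
Qed.

Lemma q_abs j v : j < n -> v \in pts -> q (4 * j + v.1, v.2) = (4 * j + (gj j v).1, (gj j v).2).
Proof. by move=> Hj Hv; case: (q_int Hj Hv). Qed.

Lemma local j : j < n -> Hleft j -> forall v, v \in pts -> gj j v = loc (decn (gj j)) v.
Proof.
move=> Hj Hl.
have Hc : map (gj j) pts \in cands_of pts.
  by apply: cands_mem => v Hv; apply: nbrs_mem; case: (q_int Hj Hv).
have Hpre : pre (map (gj j) pts).
  rewrite /pre; apply/andP; split.
  - apply/allP => v Hv; apply/implyP; rewrite (look_map _ Hv) => Hg; rewrite (look_map _ Hg).
    have Hq := q_abs Hj Hv; have Hinv := Q_invol HM (pts_Vc Hj Hv); rewrite Hq in Hinv.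
    rewrite {1}/gj Hinv /=; apply/eqP.
    by case: v {Hv Hq Hinv Hg} => a b /=; congr pair; lia.
  - rewrite !look_map //.
    have E1 : (gj j (1,2) == (0,2)) = (q (4*j+1, 2) == (4*j, 2)).
      by rewrite (q_abs Hj (v := (1,2))) //; case: (gj j (1,2)) => a b /=; rewrite !xpair_eqE; apply/idP/idP => H; bd; lia.
    have E2 : (gj j (1,3) == (0,3)) = (q (4*j+1, 3) == (4*j, 3)).
      by rewrite (q_abs Hj (v := (1,3))) //; case: (gj j (1,3)) => a b /=; rewrite !xpair_eqE; apply/idP/idP => H; bd; lia.
    by rewrite E1 E2.
have := allP chk1 _ Hc; rewrite Hpre /= => /allP Hpost v Hv.
have := Hpost v Hv; rewrite look_map //.
have -> : decn (look (map (gj j) pts)) = decn (gj j) by rewrite /decn !look_map.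
by move/eqP.
Qed.

End Local.

Lemma decn_lt6 g : decn g < 6.
Proof. by rewrite /decn; case: ifP => _ //; case: ifP => _ //; case: (_ == _); case: (_ == _). Qed.

Lemma noRL_of_nth s : (forall j, nth 0 s j = 5 -> nth 0 s j.+1 != 4) -> noRL s.
Proof.
elim: s => [|x [|y s] IH] //= H; apply/andP; split.
- apply/negP => /andP [/eqP Hx /eqP Hy].
  by have := H 0; rewrite /= Hx Hy => /(_ erefl).
- by apply: IH => j; exact: (H j.+1).
Qed.

Section Propag.
Variable n : nat.
Variable M : {set {set pyr_vertex n}}.
Hypothesis HM : is_perfect_matching (pyr_V n) (pyr_E n) M.
Local Notation q := (Q M).

Lemma Vc_cut k y : 0 < n -> k <= n -> (y = 2 \/ y = 3) -> Vc n (4*k, y).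
Proof. rewrite /Vc /= => *; lia. Qed.
Lemma Vc_cutp k y : k < n -> (y = 2 \/ y = 3) -> Vc n (4*k+1, y).
Proof. rewrite /Vc /= => *; lia. Qed.
Lemma Vc_cutm k y : 0 < k -> k <= n -> (y = 2 \/ y = 3) -> Vc n (4*k-1, y).
Proof. rewrite /Vc /= => *; lia. Qed.

Lemma qinv p w : Vc n p -> q p = w -> q w = p.
Proof. by move=> Hp <-; rewrite Q_invol. Qed.

Lemma half k y : k < n -> (y = 2 \/ y = 3) ->
  (0 < k -> (q (4*k-1, y) == (4*k, y)) = (q (4*k-1, 5-y) == (4*k, 5-y))) ->
  q (4*k+1, y) = (4*k, y) -> q (4*k+1, 5-y) = (4*k, 5-y).
Proof.
move=> Hk Hy RC H.
have Hn : 0 < n by lia.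
have Hy' : 5 - y = 2 \/ 5 - y = 3 by lia.
have H0 : q (4*k, y) = (4*k+1, y) := qinv (Vc_cutp Hk Hy) H.
have := @cut_nbr n k (5 - y) (q (4*k, 5-y)) (ltnW Hk) Hy' (Q_edge HM (Vc_cut Hn (ltnW Hk) Hy')).
case=> [[_ Ha] | [[Hk0 Ha] | Ha]].
- exact: qinv (Vc_cut Hn (ltnW Hk) Hy') Ha.
- have Hb := qinv (Vc_cut Hn (ltnW Hk) Hy') Ha.
  have := RC Hk0; rewrite Hb eqxx => /eqP Hc.
  have := qinv (Vc_cutm Hk0 (ltnW Hk) Hy) Hc; rewrite H0 => [[E]]; lia.
- have E5 : 5 - (5 - y) = y by lia.
  rewrite E5 in Ha.
  have := qinv (Vc_cut Hn (ltnW Hk) Hy') Ha; rewrite H0 => [[E1 E2]]; lia.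
Qed.

Lemma cut_step k : k < n ->
  (0 < k -> forall y, (y = 2 \/ y = 3) ->
     (q (4*k-1, y) == (4*k, y)) = (q (4*k-1, 5-y) == (4*k, 5-y))) -> Hleft M k.
Proof.
move=> Hk RC; rewrite /Hleft; apply/eqP; apply/idP/idP => /eqP H; apply/eqP.
- by have := half Hk (or_introl erefl) (fun h => RC h 2 (or_introl erefl)) H.
- by have := half Hk (or_intror erefl) (fun h => RC h 3 (or_intror erefl)) H.
Qed.

Lemma loc_side j y : j < n -> Hleft M j -> (y = 2 \/ y = 3) ->
  (q (4*j+1, y) == (4*j, y)) = (decn (gj M j) == 4)
  /\ (q (4*j+3, y) == (4*j+4, y)) = (decn (gj M j) == 5).
Proof.
move=> Hj Hl Hy.
have H1 : (1, y) \in pts by rewrite in_pts; case: Hy => ->.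
have H3 : (3, y) \in pts by rewrite in_pts; case: Hy => ->.
have E1 : q (4*j+1, y) = (4*j + (gj M j (1,y)).1, (gj M j (1,y)).2) := q_abs HM Hj H1.
have E3 : q (4*j+3, y) = (4*j + (gj M j (3,y)).1, (gj M j (3,y)).2) := q_abs HM Hj H3.
rewrite E1 E3.
rewrite !(local HM Hj Hl) //.
rewrite -(loc1y (decn_lt6 (gj M j)) Hy) -(loc3y (decn_lt6 (gj M j)) Hy).
by split; case: (loc _ _) => a b; rewrite !xpair_eqE /=; apply/idP/idP => H; bd; lia.
Qed.

Lemma Hleft_all j : j < n -> Hleft M j.
Proof.
elim: j => [|j IH] Hj; first by apply: cut_step.
have Hj' : j < n by lia.
apply: cut_step => // _ y Hy.
have Hy' : 5 - y = 2 \/ 5 - y = 3 by lia.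
have -> : 4 * j.+1 - 1 = 4 * j + 3 by lia.
have -> : 4 * j.+1 = 4 * j + 4 by lia.
have [_ ->] := loc_side Hj' (IH Hj') Hy.
by have [_ ->] := loc_side Hj' (IH Hj') Hy'.
Qed.

Definition dec := [seq decn (gj M j) | j <- iota 0 n].

Lemma nth_dec j : j < n -> nth 0 dec j = decn (gj M j).
Proof. by move=> Hj; rewrite /dec (nth_map 0) ?size_iota // nth_iota. Qed.

Lemma nth_dec_ge j : n <= j -> nth 0 dec j = 0.
Proof. by move=> Hj; rewrite nth_default // size_map size_iota. Qed.

Lemma dec_valid : valid n dec.
Proof.
apply/andP; split; first (apply/andP; split).
- by rewrite size_map size_iota.
- by apply/allP => c /mapP [j _ ->]; apply: decn_lt6.
- apply: noRL_of_nth => j H5.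
  case: (ltnP j n) => Hj; last by rewrite nth_dec_ge in H5.
  case: (ltnP j.+1 n) => Hj1; last by rewrite nth_dec_ge.
  apply/eqP => H4.
  rewrite nth_dec // in H5; rewrite nth_dec // in H4.
  have [_ A] := loc_side Hj (Hleft_all Hj) (or_introl erefl).
  have [B _] := loc_side Hj1 (Hleft_all Hj1) (or_introl erefl).
  rewrite H5 eqxx in A; rewrite H4 eqxx in B.
  move/eqP: A => A; move/eqP: B => B.
  have Hn : 0 < n by lia.
  have HV : Vc n (4*j+3, 2) by rewrite /Vc /=; lia.
  have A' := qinv HV A.
  have B' := qinv (Vc_cutp Hj1 (or_introl erefl)) B.
  have E2 : 4 * j + 4 = 4 * j.+1 by lia.
  by rewrite E2 in A'; rewrite A' in B'; case: B' => E; lia.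
Qed.

Lemma q_pt p : Vc n p -> q p = pt dec p.
Proof.
move=> Hp; have Hn : 0 < n by case/andP: Hp.
have [j [r [Ep [[Hr [Hj Hy]] | [Hj Hin]]]]] := Vc_dec dec_valid Hp; rewrite Ep.
- rewrite Hr addn0 pt_cut.
  have HV := Vc_cut Hn Hj Hy.
  case: ifP => [/eqP H4 | H4].
    have Hjn := nth4_lt dec_valid H4.
    rewrite nth_dec // in H4.
    have [A _] := loc_side Hjn (Hleft_all Hjn) Hy.
    rewrite H4 eqxx in A; exact: qinv (Vc_cutp Hjn Hy) (eqP A).
  case: ifP => [/andP [H0 /eqP H5] | H5].
    have Hjn := nth5_lt dec_valid H5.
    rewrite nth_dec // in H5.
    have [_ A] := loc_side Hjn (Hleft_all Hjn) Hy.
    rewrite H5 eqxx in A.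
    have E : 4 * j.-1 + 3 = 4 * j - 1 by lia.
    have E' : 4 * j.-1 + 4 = 4 * j by lia.
    rewrite E E' in A; exact: qinv (Vc_cutm H0 Hj Hy) (eqP A).
  have := @cut_nbr n j p.2 (q (4*j, p.2)) Hj Hy (Q_edge HM HV).
  case=> [[Hjn Ha] | [[Hj0 Ha] | Ha]] //.
  + exfalso; have [A _] := loc_side Hjn (Hleft_all Hjn) Hy.
    rewrite (qinv HV Ha) eqxx -nth_dec // in A.
    by rewrite -A in H4.
  + exfalso; have Hjn : j.-1 < n by lia.
    have [_ A] := loc_side Hjn (Hleft_all Hjn) Hy.
    have E : 4 * j.-1 + 3 = 4 * j - 1 by lia.
    have E' : 4 * j.-1 + 4 = 4 * j by lia.
    rewrite E E' (qinv HV Ha) eqxx -nth_dec // in A.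
    by rewrite Hj0 -A in H5.
- have E1 : q (4*j + r, p.2) = (4*j + (gj M j (r,p.2)).1, (gj M j (r,p.2)).2) := q_abs HM Hj Hin.
  have E2 : pt dec (4*j + r, p.2) =
    (4*j + (loc (nth 0 dec j) (r,p.2)).1, (loc (nth 0 dec j) (r,p.2)).2) := pt_int dec j Hin.
  by rewrite E1 E2 (local HM Hj (Hleft_all Hj) Hin) nth_dec.
Qed.

Lemma PM_build : exists s, valid n s /\ M = build n s.
Proof. exists dec; split; first exact: dec_valid. rewrite /build; exact: (@M_eq_Mof n M HM (pt dec) q_pt). Qed.

End Propag.

Definition wsum (s : seq nat) := sumn (map wt s).

Lemma pts_Vc0 n j v : j < n -> v \in pts -> Vc n (4 * j + v.1, v.2).
Proof. by case: v => r y; rewrite in_pts /Vc /= => Hj H; lia. Qed.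

Lemma wsum_big n s : size s = n -> wsum s = \sum_(j < n) wt (nth 0 s j).
Proof.
move=> <-; rewrite /wsum sumnE big_map (big_nth 0) big_mkord.
by [].
Qed.

Section Force.
Variable n : nat.
Variable s : seq nat.

Definition Sw : {set 'I_n * bool} := [set p : 'I_n * bool | ~~ p.2 || (nth 0 s p.1 < 4)].
Definition eG (j : nat) (e : (nat * nat) * (nat * nat)) : {set pyr_vertex n} :=
  [set mk n (4 * j + e.1.1, e.1.2); mk n (4 * j + e.2.1, e.2.2)].
Definition S0 : {set {set pyr_vertex n}} :=
  [set eG p.1 (nth ((0,0),(0,0)) (S0loc (nth 0 s p.1)) p.2) | p : 'I_n * bool in Sw].

Hypothesis Hs : valid n s.

Lemma S0loc_props c e : c < 6 -> e \in S0loc c -> e.1 \in pts /\ loc c e.1 = e.2.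
Proof.
move=> Hc He; have [_ _ _ _ [_ /allP H _]] := chk2cE Hc.
by have /andP [H1 /eqP H2] := H e He.
Qed.

Lemma size_S0loc c : c < 6 -> size (S0loc c) = wt c.
Proof. by move=> Hc; have [_ _ _ _ [H _ _]] := chk2cE Hc. Qed.

Lemma eG_pt j e : j < n -> e \in S0loc (nth 0 s j) ->
  Vc n (4 * j + e.1.1, e.1.2) /\ pt s (4 * j + e.1.1, e.1.2) = (4 * j + e.2.1, e.2.2).
Proof.
move=> Hj He; have [H1 H2] := S0loc_props (nth_lt6 Hs j) He.
split; first exact: (@pts_Vc0 n j e.1 Hj H1).
have E := pt_int s j H1; rewrite /= in E; by rewrite E H2.
Qed.

Lemma eG_in j e : j < n -> e \in S0loc (nth 0 s j) -> eG j e \in build n s.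
Proof.
move=> Hj He; have [HV Hp] := eG_pt Hj He.
by rewrite /eG -Hp; apply: build_in.
Qed.

Lemma Sw_mem (p : 'I_n * bool) : p \in Sw -> nth ((0,0),(0,0)) (S0loc (nth 0 s p.1)) p.2 \in S0loc (nth 0 s p.1).
Proof.
rewrite inE => H; apply: mem_nth; rewrite size_S0loc ?(nth_lt6 Hs) // /wt.
by move: H; case: (p.2) => /= H; [rewrite H | case: ifP].
Qed.

Lemma S0_sub : S0 \subset build n s.
Proof.
apply/subsetP => e /imsetP [p Hp ->]; apply: eG_in; first exact: ltn_ord.
exact: Sw_mem.
Qed.

Lemma S0loc_idx j e : j < n -> e \in S0loc (nth 0 s j) -> eG j e \in S0.
Proof.
move=> Hj He; set c := nth 0 s j.
have Hc : c < 6 by exact: (nth_lt6 Hs j).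
have Hi : index e (S0loc c) < wt c by rewrite -size_S0loc // index_mem.
pose b := (index e (S0loc c) == 1).
have Hb : nat_of_bool b = index e (S0loc c).
  by rewrite /b; move: Hi; rewrite /wt; case: (index e (S0loc c)) => [|[|k]] //=; case: ifP.
apply/imsetP; exists (Ordinal Hj, b).
  rewrite inE /= -/c /b; move: Hi; rewrite /wt.
  by case: ifP => _; case: (index e (S0loc c)) => [|[|k]].
rewrite /= -/c; congr (eG _ _).
by rewrite Hb nth_index.
Qed.

Lemma S0_force s' : valid n s' -> S0 \subset build n s' -> s' = s.
Proof.
move=> Hs' Hsub; apply: (@eq_from_nth _ 0); first by rewrite (eqP (proj1 (andP (proj1 (andP Hs'))))) (eqP (proj1 (andP (proj1 (andP Hs))))).
move=> j; rewrite (eqP (proj1 (andP (proj1 (andP Hs'))))) => Hj.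
set c := nth 0 s j.
have Hc : c < 6 by exact: (nth_lt6 Hs j).
have [_ _ _ _ [_ _ H]] := chk2cE Hc.
apply: H; first exact: (nth_lt6 Hs').
apply/allP => e He.
have [HV Hp] := eG_pt Hj He.
have [H1 _] := S0loc_props Hc He.
have HVb : Vc n (4 * j + e.2.1, e.2.2).
  by have := pt_edge Hs HV; rewrite Hp => /edgeC_Vc /andP [].
have Hm := subsetP Hsub _ (S0loc_idx Hj He).
have := build_mem Hs' HV HVb Hm.
have E := pt_int s' j H1; rewrite /= in E; rewrite E.
by case => /eqP; rewrite eqn_add2l => /eqP E1 E2; apply/eqP; case: (loc _ _) E1 E2 => a b /= -> ->; case: (e.2).
Qed.

Lemma card_S0 : #|S0| <= #|Sw|.
Proof. exact: leq_imset_card. Qed.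

Lemma card_Sw : #|Sw| = wsum s.
Proof.
rewrite -sum1_card.
have E : \sum_(p in Sw) 1 = \sum_(j : 'I_n) \sum_(b : bool | ~~ b || (nth 0 s j < 4)) 1.
  by rewrite pair_big_dep /=; apply: eq_bigl => p; rewrite inE.
rewrite E (wsum_big (eqP (proj1 (andP (proj1 (andP Hs)))))).
apply: eq_bigr => j _.
rewrite big_mkcond big_bool /= /wt.
by case: ifP.
Qed.

End Force.

Lemma build_inj n s1 s2 : valid n s1 -> valid n s2 -> build n s1 = build n s2 -> s1 = s2.
Proof.
move=> H1 H2 E; symmetry; apply: (S0_force H1 H2).
by rewrite -E; apply: S0_sub.
Qed.

Lemma forcing_self n (M : {set {set pyr_vertex n}}) :
  is_perfect_matching (pyr_V n) (pyr_E n) M -> forcing_set (pyr_V n) (pyr_E n) M M.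
Proof.
move=> HM; rewrite /forcing_set subxx /=; apply/forallP => M'; apply/implyP.
rewrite inE => HM'; apply/implyP => Hsub; rewrite eqEsubset Hsub andbT.
apply/subsetP => e He.
have [u [w Ee]] := E_form (subsetP (HM_sub HM') _ He).
have Hu : u \in pyr_V n by apply: (@E_V _ u w); rewrite -Ee (subsetP (HM_sub HM')).
have H1 := partner_in HM Hu.
have E1 := partner_uniq HM' Hu (subsetP Hsub _ H1).
have E2 := partner_uniq HM' Hu (etrans (esym (f_equal (fun x => x \in M') Ee)) He).
by rewrite Ee E2 -E1.
Qed.

Lemma Zrel_excl c r y : c < 4 -> Zrel c false (r, y) -> Zrel c true (r, y) -> False.
Proof. rewrite /Zrel /= => Hc; have -> : (c == 4) = false by lia. have -> : (c == 5) = false by lia. lia. Qed.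
Lemma Zrel_4 c b y : c < 6 -> Zrel c b (4, y) -> c = 5.
Proof. rewrite /Zrel /= => Hc; case: ifP => [/eqP -> //|_]; case: ifP => [/eqP -> //|_]; lia. Qed.
Lemma Zrel_0 c b y : c < 6 -> Zrel c b (0, y) -> c = 4.
Proof. rewrite /Zrel /= => Hc; case: ifP => [/eqP -> //|_]; case: ifP => [/eqP -> //|_]; lia. Qed.

Section Lower.
Variable n : nat.
Variable s : seq nat.
Hypothesis Hs : valid n s.

Definition alt (p : 'I_n * bool) := set_nth 0 s p.1 (newc (nth 0 s p.1) p.2).

Lemma size_s : size s = n. Proof. exact: (eqP (proj1 (andP (proj1 (andP Hs))))). Qed.

Lemma nth_alt (p : 'I_n * bool) i : nth 0 (alt p) i = if i == p.1 then newc (nth 0 s p.1) p.2 else nth 0 s i.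
Proof. by rewrite /alt nth_set_nth /=. Qed.

Lemma newc_lt (p : 'I_n * bool) : newc (nth 0 s p.1) p.2 < 4.
Proof. by have [_ H] := newc_prop p.2 (nth_lt6 Hs p.1). Qed.
Lemma newc_ne (p : 'I_n * bool) : newc (nth 0 s p.1) p.2 != nth 0 s p.1.
Proof. by have [H _] := newc_prop p.2 (nth_lt6 Hs p.1). Qed.

Lemma alt_valid p : valid n (alt p).
Proof.
apply/andP; split; first (apply/andP; split).
- rewrite /alt size_set_nth size_s; have := ltn_ord p.1; lia.
- apply/(all_nthP 0) => i _; rewrite nth_alt; case: ifP => _.
    by have := newc_lt p; lia.
  exact: nth_lt6 Hs i.
- apply: noRL_of_nth => i; rewrite !nth_alt.
  have := newc_lt p.
  case: ifP => Hi1.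
    by move=> H1 H2; rewrite H2 in H1.
  case: ifP => Hi2 H1 H5; first by lia.
  exact: (@nth_noRL n s Hs i H5).
Qed.

Lemma build_alt_neq p : build n (alt p) != build n s.
Proof.
apply/eqP => E; have := build_inj (alt_valid p) Hs E => E'.
have := f_equal (fun t => nth 0 t p.1) E'; rewrite /= nth_alt eqxx => E''.
by move: (newc_ne p); rewrite E'' eqxx.
Qed.

Definition inZ (p : 'I_n * bool) (a : nat * nat) :=
  (4 * p.1 <= a.1 <= 4 * p.1 + 4) && Zrel (nth 0 s p.1) p.2 (a.1 - 4 * p.1, a.2).

Lemma zsupport p a : Vc n a -> pt (alt p) a != pt s a -> inZ p a.
Proof.
move=> Ha Hne.
have [j [r [Ep [[Hr [Hj Hy]] | [Hj Hin]]]]] := Vc_dec Hs Ha; rewrite Ep in Hne *.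
- rewrite Hr addn0 in Hne *; rewrite !pt_cut !nth_alt in Hne.
  have Hl := newc_lt p.
  case: (j =P p.1) => Ej.
  + rewrite Ej eqxx in Hne.
    have Hl4 : (newc (nth 0 s p.1) p.2 == 4) = false by lia.
    rewrite Hl4 in Hne.
    case: (boolP (nth 0 s p.1 == 4)) => [/eqP H4 | H4].
      rewrite /inZ Ej /= subnn H4 leqnn leq_addr /Zrel /=.
      by case: Hy => ->.
    rewrite (negbTE H4) in Hne.
    case: (boolP (0 < p.1)) Hne => Hp0 Hne.
      rewrite (_ : (p.1.-1 == p.1) = false) in Hne; last by lia.
      by rewrite eqxx in Hne.
    by rewrite /= eqxx in Hne.
  + have Hj' : (j == p.1) = false by apply/eqP.
    rewrite Hj' in Hne.
    case: (j.-1 =P p.1) => Ej1.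
    * have Hj0 : 0 < j by move/eqP: Ej => Ej; lia.
      rewrite Ej1 eqxx in Hne.
      have Hl5 : (newc (nth 0 s p.1) p.2 == 5) = false by lia.
      rewrite Hl5 andbF in Hne.
      case: ifP Hne => [_ | H4]; first by rewrite eqxx.
      rewrite Hj0 /=; case: ifP => [/eqP H5 _ | _]; last by rewrite eqxx.
      have Ej' : j = p.1 + 1 by lia.
      rewrite /inZ Ej' /=.
      have -> : 4 * (p.1 + 1) = 4 * p.1 + 4 by lia.
      rewrite leq_addr leqnn /=.
      have -> : 4 * p.1 + 4 - 4 * p.1 = 4 by lia.
      by rewrite H5 /Zrel /=; case: Hy => ->.
    * have Hj1 : (j.-1 == p.1) = false by apply/eqP.
      by rewrite Hj1 eqxx in Hne.
- have E1 := pt_int (alt p) j Hin; have E2 := pt_int s j Hin; rewrite /= in E1 E2.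
  rewrite E1 E2 nth_alt in Hne.
  case: (j =P p.1) => Ej; last first.
    by move/eqP: Ej => /negbTE Ej; rewrite Ej eqxx in Hne.
  rewrite Ej eqxx in Hne.
  have Hz : Zrel (nth 0 s p.1) p.2 (r, a.2).
    apply: (newc_Z (@nth_lt6 n s Hs p.1) Hin).
    by apply/eqP => E; move: Hne; rewrite -E eqxx.
  rewrite /inZ /=.
  have -> : 4 * j + r - 4 * p.1 = r by lia.
  rewrite Hz andbT; move: Hin; rewrite in_pts; lia.
Qed.

Lemma disj_lt (j j' : nat) b b' x y : j < j' -> (4 * j <= x <= 4 * j + 4) -> (4 * j' <= x <= 4 * j' + 4) ->
  Zrel (nth 0 s j) b (x - 4 * j, y) -> Zrel (nth 0 s j') b' (x - 4 * j', y) -> False.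
Proof.
move=> Hjj Hx Hx' Hz Hz'.
have Ej' : j' = j.+1 by lia.
rewrite (_ : x - 4 * j = 4) in Hz; last by lia.
rewrite (_ : x - 4 * j' = 0) in Hz'; last by lia.
have H5 := Zrel_4 (nth_lt6 Hs j) Hz.
have H4 := Zrel_0 (nth_lt6 Hs j') Hz'.
have := @nth_noRL n s Hs j H5; by rewrite -Ej' H4.
Qed.

Lemma disj (p p' : 'I_n * bool) a : p \in Sw n s -> p' \in Sw n s -> inZ p a -> inZ p' a -> p = p'.
Proof.
case: p p' => [j b] [j' b']; rewrite !inE /inZ /= => Hp Hp' /andP [Hx Hz] /andP [Hx' Hz'].
case: (ltngtP j j') => Hjj.
- by exfalso; apply: (disj_lt Hjj Hx Hx' Hz Hz').
- by exfalso; apply: (disj_lt Hjj Hx' Hx Hz' Hz).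
- have Ej : j = j' by apply: val_inj.
  subst j'; congr pair.
  case: b b' Hp Hp' Hz Hz' => [] [] //= Hp Hp' Hz Hz'.
  + by exfalso; apply: (Zrel_excl Hp Hz' Hz).
  + by exfalso; apply: (Zrel_excl Hp' Hz Hz').
Qed.

End Lower.

Lemma bigmin_le (I : eqType) (r : seq I) (P : pred I) (F : I -> nat) i0 x :
  x \in r -> P x -> \big[minn/i0]_(i <- r | P i) F i <= F x.
Proof.
elim: r => [|y r IH] //= Hx Px; rewrite big_cons.
case: (boolP (x == y)) => [/eqP Exy | Hne].
  by subst y; rewrite Px geq_minl.
have Hr : x \in r by move: Hx; rewrite inE (negbTE Hne).
case: ifP => _; last exact: IH.
exact: leq_trans (geq_minr _ _) (IH Hr Px).
Qed.

Section FN.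
Variable n : nat.
Variable s : seq nat.
Hypothesis Hs : valid n s.

Lemma lower S : forcing_set (pyr_V n) (pyr_E n) (build n s) S -> wsum s <= #|S|.
Proof.
case/andP => Hsub /forallP Hf.
pose P (p : 'I_n * bool) (e : {set pyr_vertex n}) := (e \in S) && (e \notin build n (alt s p)).
have Hex : forall p, p \in Sw n s -> exists e, P p e.
  move=> p Hp; case: (pickP (P p)) => [e He | Hn]; first by exists e.
  exfalso.
  have Hsub' : S \subset build n (alt s p).
    by apply/subsetP => e He; move: (Hn e); rewrite /P He /= => /negbFE.
  have := Hf (build n (alt s p)); rewrite inE build_PM ?alt_valid // Hsub' /= => /eqP E.
  by move: (build_alt_neq Hs p); rewrite E eqxx.
pose f (p : 'I_n * bool) := odflt set0 [pick e | P p e].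
have Hf1 : forall p, p \in Sw n s -> P p (f p).
  move=> p Hp; rewrite /f; case: pickP => [e He //|Hn].
  by have [e He] := Hex p Hp; rewrite Hn in He.
rewrite -(card_Sw Hs) -(@card_in_imset _ _ f).
  apply: subset_leq_card; apply/subsetP => e /imsetP [p Hp ->].
  by case/andP: (Hf1 p Hp).
move=> p p' Hp Hp' E.
have /andP [HS Hn1] := Hf1 p Hp.
have /andP [_ Hn2] := Hf1 p' Hp'.
have := subsetP Hsub _ HS; rewrite inE => /existsP [u /andP [Hu /eqP Ee]].
have Ha : Vc n (coords u) := V_Vc Hu.
have K : forall q, f q = f p -> f q \notin build n (alt s q) -> inZ s q (coords u).
  move=> q Eq Hq; apply: (zsupport Hs Ha); apply/negP => /eqP Ept.
  move: Hq; rewrite Eq Ee -{1}(mkK u) -Ept.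
  by rewrite build_in ?alt_valid.
have Z1 := K p erefl Hn1.
have Z2 := K p' (esym E) Hn2.
exact: (@disj n s Hs p p' (coords u) Hp Hp' Z1 Z2).
Qed.

Lemma S0_forcing : forcing_set (pyr_V n) (pyr_E n) (build n s) (S0 n s).
Proof.
rewrite /forcing_set S0_sub //=; apply/forallP => M'; apply/implyP; rewrite inE => HM'.
apply/implyP => Hsub.
have [s' [Hs' E]] := PM_build HM'.
have Hsub' : S0 n s \subset build n s' by rewrite -E.
by rewrite E (S0_force Hs Hs' Hsub').
Qed.

Lemma fn_build : forcing_number (pyr_V n) (pyr_E n) (build n s) = wsum s.
Proof.
rewrite /forcing_number; apply/eqP; rewrite eqn_leq; apply/andP; split.
- apply: leq_trans (bigmin_le _ _ (mem_index_enum (S0 n s)) S0_forcing) _.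
  by rewrite -(card_Sw Hs); exact: card_S0.
- apply: (big_ind (fun x => wsum s <= x)).
  + exact: lower (forcing_self (build_PM Hs)).
  + by move=> x y Hx Hy; rewrite leq_min Hx Hy.
  + by move=> S HS; apply: lower.
Qed.
End FN.

Fixpoint Ls (n : nat) : seq (seq nat) :=
  if n is m.+1 then [seq t <- [seq c :: s | c <- iota 0 6, s <- Ls m] | noRL t] else [:: [::]].

Lemma Ls_S n : Ls n.+1 = [seq t <- [seq c :: s | c <- iota 0 6, s <- Ls n] | noRL t].
Proof. by []. Qed.

Lemma noRL_cons c s : noRL (c :: s) = ~~ ((c == 5) && (head 0 s == 4)) && noRL s.
Proof. by case: s => [|y s] //=; rewrite andbF. Qed.

Lemma mem_Ls n s : (s \in Ls n) = valid n s.
Proof.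
elim: n s => [|n IH] s.
  by rewrite /= inE /valid; case: s.
rewrite Ls_S mem_filter; apply/idP/idP.
- case/andP => Hn Hm; have [[c t] /= [Hc Ht Et]] := allpairsP Hm; subst s.
  move: Ht; rewrite IH /valid => /andP [/andP [/eqP Hsz Hall] _].
  rewrite Hn andbT /= eqSS Hsz eqxx Hall andbT /=; by move: Hc; rewrite ?mem_iota ?inE; lia.
- case: s => [|c t]; first by rewrite /valid.
  move=> Hv; have Hn : noRL (c :: t) by case/andP: Hv.
  move: Hv; rewrite /valid [size _]/= eqSS => /andP [/andP [Hsz Hall'] _].
  case/andP: Hall' => Hc Hall.
  rewrite Hn andTb; apply: (allpairs_f (fun c s => c :: s)).
    by rewrite mem_iota.
  rewrite IH /valid Hsz; apply/andP; split; first exact: Hall. by move: Hn; rewrite noRL_cons => /andP [].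
Qed.

Lemma uniq_Ls n : uniq (Ls n).
Proof.
elim: n => [|n IH] //; rewrite Ls_S; apply: filter_uniq.
apply: allpairs_uniq; [exact: iota_uniq | exact: IH | ].
by move=> [c1 s1] [c2 s2] _ _ /= [-> ->].
Qed.

Local Open Scope ring_scope.

Lemma sum_PM n (F : {set {set pyr_vertex n}} -> {poly int}) :
  \sum_(M in perfect_matchings (pyr_V n) (pyr_E n)) F M = \sum_(s <- Ls n) F (build n s).
Proof.
rewrite -big_enum (_ : \sum_(s <- Ls n) F (build n s) = \sum_(M <- map (build n) (Ls n)) F M); last by rewrite big_map.
apply: perm_big; apply: uniq_perm.
- exact: enum_uniq.
- rewrite map_inj_in_uniq ?uniq_Ls // => s1 s2; rewrite !mem_Ls; exact: build_inj.
- move=> M; rewrite mem_enum inE; apply/idP/mapP.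
  + by move=> HM; have [s [Hs ->]] := PM_build HM; exists s; rewrite ?mem_Ls.
  + by case=> s; rewrite mem_Ls => Hs ->; apply: build_PM.
Qed.

Definition A n : {poly int} := \sum_(s <- Ls n) 'X^(wsum s).
Definition B n : {poly int} := \sum_(s <- Ls n | head 0%N s == 4%N) 'X^(wsum s).

Lemma F_eq n : F_pyrene n = A n.
Proof.
case: n => [|n]; first by rewrite /A /= big_seq1 expr0.
rewrite /F_pyrene /forcing_poly sum_PM /A; apply: eq_big_seq => s Hs.
by rewrite fn_build // -mem_Ls.
Qed.

Local Open Scope ring_scope.

Lemma Ls_sum n (Q : pred nat) :
  \sum_(t <- Ls n.+1 | Q (head 0%N t)) 'X^(wsum t) =
  \sum_(c <- iota 0 6 | Q c) 'X^(wt c) * (if c == 5%N then A n - B n else A n).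
Proof.
rewrite Ls_S big_filter_cond big_mkcond big_allpairs_dep [RHS]big_mkcond.
apply: eq_big_seq => c Hc.
case: (boolP (Q c)) => HQ.
- transitivity (\sum_(s <- Ls n | ~~ ((c == 5%N) && (head 0%N s == 4%N))) ('X^(wt c) * 'X^(wsum s) : {poly int})).
    rewrite [RHS]big_mkcond; apply: eq_big_seq => s Hs.
    have Hh : head 0%N (c :: s) = c by [].
    have Hw : wsum (c :: s) = (wt c + wsum s)%N by [].
    have Hv : noRL s by move: Hs; rewrite mem_Ls => /andP [].
    by rewrite andbT noRL_cons Hv andbT Hw exprD.
  rewrite -big_distrr; congr (_ * _).
  have [Ec|Hc5] := eqVneq c 5%N; first subst c.
    rewrite /A [in RHS](bigID (fun s => head 0%N s == 4%N)) /=.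
    by rewrite /B addrAC subrr add0r.
  by [].
- by rewrite big1_seq // => s _; rewrite andbF.
Qed.

Lemma A0 : A 0 = 1.
Proof. by rewrite /A /= big_seq1 expr0. Qed.
Lemma B0 : B 0 = 0.
Proof. by rewrite /B /= big_cons /= big_nil. Qed.

Lemma A_rec n : A n.+1 = (4%:R *: 'X^2 + 2%:R *: 'X) * A n - 'X * B n.
Proof.
have E := Ls_sum n xpredT.
rewrite /= !big_cons big_nil /= in E.
rewrite /A in E *; rewrite E.
rewrite -!mul_polyC !polyC_natr.
ring.
Qed.

Lemma B_rec n : B n.+1 = 'X * A n.
Proof.
have E := Ls_sum n (pred1 4%N).
rewrite /= !big_cons big_nil /= in E.
rewrite /B E.
by rewrite expr1 addr0.
Qed.


Theorem theorem3p1 :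
  F_pyrene 1 = 4%:R *: 'X^2 + 2%:R *: 'X /\
  (forall n : nat, (2 <= n)%N ->
     F_pyrene n = (4%:R *: 'X^2 + 2%:R *: 'X) * F_pyrene n.-1
                  - 'X^2 * F_pyrene n.-2).
Proof.
split.
- by rewrite F_eq A_rec A0 B0 mulr1 mulr0 subr0.
- case=> [|[|m]] // _.
  rewrite !F_eq /= A_rec B_rec.
  by rewrite mulrA -expr2.
Qed.
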